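(* Let $R \neq \epsilon$ be a homogeneous regular expression. Then there exist $\ell \leq \mathrm{rpn}(R)$ log-product expressions $B_1, \dots, B_{\ell}$ such that $R \equiv B_1 + \dots + B_{\ell}$.
   Context: Regular expressions (without star, without $\emptyset$) are built from $\epsilon$ and letters by union and concatenation; $\mathrm{rpn}(R)$ is the number of nodes of the syntax tree of $R$; $R\equiv R'$ means they describe the same language. A homogeneous expression describes a language all of whose words have the same length, its degree $\deg R$. A homogeneous expression $B$ is log-product if it is a letter, or there are homogeneous expressions $B_1,B_2$ with $B_1$ log-product, $\deg B_1\ge\deg B_2$ and $B=B_1B_2$ or $B=B_2B_1$. *)

(* Defs.v *)
From mathcomp Require Import all_boot.
From Stdlib Require List.

Set Implicit Arguments.
Unset Strict Implicit.
Unset Printing Implicit Defensive.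

Inductive re (A : Type) : Type :=
  | Eps : re A
  | Letter : A -> re A
  | Plus : re A -> re A -> re A
  | Cat : re A -> re A -> re A.

Arguments Eps {A}.

Fixpoint lang (A : Type) (r : re A) (w : seq A) : Prop :=
  match r with
  | Eps => w = [::]
  | Letter a => w = [:: a]
  | Plus r1 r2 => lang r1 w \/ lang r2 w
  | Cat r1 r2 => exists u v, w = u ++ v /\ lang r1 u /\ lang r2 v
  end.

Definition re_equiv (A : Type) (r s : re A) : Prop :=
  forall w, lang r w <-> lang s w.

Fixpoint rpn (A : Type) (r : re A) : nat :=
  match r with
  | Eps => 1
  | Letter _ => 1
  | Plus r1 r2 => (rpn r1 + rpn r2).+1
  | Cat r1 r2 => (rpn r1 + rpn r2).+1
  end.

Definition has_deg (A : Type) (r : re A) (n : nat) : Prop :=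
  forall w, lang r w -> size w = n.

Definition homogeneous (A : Type) (r : re A) : Prop :=
  exists n, has_deg r n.

Inductive log_product (A : Type) : re A -> Prop :=
  | LP_letter : forall a, log_product (Letter a)
  | LP_catl : forall b1 b2 n1 n2, log_product b1 -> has_deg b1 n1 ->
      has_deg b2 n2 -> n2 <= n1 -> log_product (Cat b1 b2)
  | LP_catr : forall b1 b2 n1 n2, log_product b1 -> has_deg b1 n1 ->
      has_deg b2 n2 -> n2 <= n1 -> log_product (Cat b2 b1).

Fixpoint re_sum (A : Type) (b : re A) (bs : seq (re A)) : re A :=
  match bs with
  | [::] => b
  | c :: cs => Plus b (re_sum c cs)
  end.

(* Main.v *)
Require Import Defs.
From mathcomp Require Import all_boot.
From Stdlib Require List.

Section S.
Variable A : Type.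

Lemma lang_ne (r : re A) : exists w, lang r w.
Proof.
elim: r => [|a|r1 [u1 H1] r2 [u2 H2]|r1 [u1 H1] r2 [u2 H2]] /=.
- by exists [::].
- by exists [:: a].
- by exists u1; left.
- by exists (u1 ++ u2), u1, u2.
Qed.

Definition slang (l : seq (re A)) w := exists c, List.In c l /\ lang c w.

Lemma lang_sum b bs w : lang (re_sum b bs) w <-> slang (b :: bs) w.
Proof.
elim: bs b => [|c cs IH] b /=.
  by split; [move=> H; exists b; split; [left|] | move=> [c [[<-|[]] H]]].
rewrite IH; split.
  move=> [H|[c' [Hin H]]]; first by exists b; split; [left|].
  by exists c'; split; [right|].
move=> [c' [[<-|Hin] H]]; [by left | by right; exists c'].
Qed.

Lemma main (R : re A) d : has_deg R d -> 0 < d ->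
  exists l : seq (re A), l <> [::] /\ size l <= rpn R /\
    List.Forall (@log_product A) l /\ forall w, lang R w <-> slang l w.
Proof.
elim: R d => [|a|r1 IH1 r2 IH2|r1 IH1 r2 IH2] d Hd d0.
- have := Hd [::] erefl. by move=> /= E; rewrite -E in d0.
- exists [:: Letter a]; split=> //; split=> //; split.
    by constructor; [constructor|constructor].
  move=> w; split; first by move=> H; exists (Letter a); split; [left|].
  by move=> [c [[<-|[]] H]].
- have H1 : has_deg r1 d by move=> w H; apply: Hd; left.
  have H2 : has_deg r2 d by move=> w H; apply: Hd; right.
  have [l1 [n1 [s1 [f1 e1]]]] := IH1 d H1 d0.
  have [l2 [n2 [s2 [f2 e2]]]] := IH2 d H2 d0.
  exists (l1 ++ l2); split; first by clear -n1; case: l1 n1.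
  split; first by rewrite size_cat /=; apply: leqW; apply: leq_add.
  split; first by apply/List.Forall_app.
  move=> w /=; rewrite e1 e2; split.
    move=> [[c [Hi H]]|[c [Hi H]]]; exists c; split=> //;
      apply: List.in_or_app; tauto.
  move=> [c [Hi H]]; case: (List.in_app_or _ _ _ Hi) => Hi'.
    by left; exists c.
  by right; exists c.
- have [u1 L1] := lang_ne r1; have [v1 L2] := lang_ne r2.
  have Huv : size (u1 ++ v1) = d by apply: Hd; exists u1, v1.
  have D1 : has_deg r1 (size u1).
    move=> u Hu; have : size (u ++ v1) = d by apply: Hd; exists u, v1.
    by rewrite -Huv !size_cat => /eqP; rewrite eqn_add2r => /eqP.
  have D2 : has_deg r2 (size v1).
    move=> v Hv; have : size (u1 ++ v) = d by apply: Hd; exists u1, v.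
    by rewrite -Huv !size_cat => /eqP; rewrite eqn_add2l => /eqP.
  rewrite size_cat in Huv.
  case: (posnP (size u1)) => [z1|p1].
    have E1 : forall u, lang r1 u <-> u = [::].
      move=> u; split; first by move=> /D1; rewrite z1 => /size0nil.
      by move=> ->; move: z1 L1 => /size0nil ->.
    have D2' : has_deg r2 d by rewrite -Huv z1.
    have [l [n [s [f e]]]] := IH2 d D2' d0.
    exists l; split=> //; split; first by apply: leq_trans s _; apply: leqW; apply: leq_addl.
    split=> // w; rewrite -e /=; split.
      by move=> [u [v [-> [/E1 -> H]]]].
    by move=> H; exists [::], w; rewrite E1.
  case: (posnP (size v1)) => [z2|p2].
    have E2 : forall u, lang r2 u <-> u = [::].
      move=> u; split; first by move=> /D2; rewrite z2 => /size0nil.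
      by move=> ->; move: z2 L2 => /size0nil ->.
    have D1' : has_deg r1 d by rewrite -Huv z2 addn0.
    have [l [n [s [f e]]]] := IH1 d D1' d0.
    exists l; split=> //; split; first by apply: leq_trans s _; apply: leqW; apply: leq_addr.
    split=> // w; rewrite -e /=; split.
      by move=> [u [v [-> [H /E2 ->]]]]; rewrite cats0.
    by move=> H; exists w, [::]; rewrite E2 cats0.
  case: (leqP (size v1) (size u1)) => Hle.
    have [l [n [s [f e]]]] := IH1 _ D1 p1.
    exists (map (fun b => Cat b r2) l); split; first by clear -n; case: l n.
    split; first by rewrite size_map; apply: leq_trans s _; apply: leqW; apply: leq_addr.
    split.
      apply/List.Forall_forall => c /List.in_map_iff [b [<- Hb]].
      have Lb := proj1 (List.Forall_forall _ _) f b Hb.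
      apply: (LP_catl Lb _ D2 Hle).
      by move=> w Hw; apply: D1; apply/e; exists b.
    move=> w /=; split.
      move=> [u [v [-> [/e [b [Hb Hu]] Hv]]]].
      exists (Cat b r2); split; first by apply: List.in_map.
      by exists u, v.
    move=> [c [/List.in_map_iff [b [<- Hb]] [u [v [-> [Hu Hv]]]]]].
    by exists u, v; split=> //; split=> //; apply/e; exists b.
  have [l [n [s [f e]]]] := IH2 _ D2 p2.
  exists (map (fun b => Cat r1 b) l); split; first by clear -n; case: l n.
  split; first by rewrite size_map; apply: leq_trans s _; apply: leqW; apply: leq_addl.
  split.
    apply/List.Forall_forall => c /List.in_map_iff [b [<- Hb]].
    have Lb := proj1 (List.Forall_forall _ _) f b Hb.
    apply: (LP_catr Lb _ D1 (ltnW Hle)).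
    by move=> w Hw; apply: D2; apply/e; exists b.
  move=> w /=; split.
    move=> [u [v [-> [Hu /e [b [Hb Hv]]]]]].
    exists (Cat r1 b); split; first by apply: List.in_map.
    by exists u, v.
  move=> [c [/List.in_map_iff [b [<- Hb]] [u [v [-> [Hu Hv]]]]]].
  by exists u, v; split=> //; split=> //; apply/e; exists b.
Qed.

End S.

Theorem lemma6p2 (A : Type) (R : re A) :
  homogeneous R -> ~ re_equiv R Eps ->
  exists (b : re A) (bs : seq (re A)),
    (size bs).+1 <= rpn R /\
    log_product b /\ List.Forall (@log_product A) bs /\
    re_equiv R (re_sum b bs).
Proof.
move=> [d Hd] Hne.
case: (posnP d) => [z|p].
  exfalso; apply: Hne => w /=; split.
    by move=> /Hd; rewrite z => /size0nil.
  have [u Hu] := @lang_ne A R.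
  by move=> ->; move: (Hd _ Hu); rewrite z => /size0nil <-.
have [[|b bs] [n [s [f e]]]] := @main A R d Hd p => //.
exists b, bs; split=> //.
have Hf := f; inversion Hf; subst.
split=> //; split=> // w; rewrite e lang_sum; done.
Qed.
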